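(* Let $n\ge1$. The canonical frame $\mathfrak{P}^c=(P^c,\subseteq)$ of $\mathbf{ML}_n$ satisfies (uni): for any $\Gamma,\Delta,\Sigma\in P^c$ with $\Gamma\subseteq\Delta$ and $\Gamma\subseteq\Sigma$, there is $\Theta\in P^c$ with $\Gamma\subseteq\Theta$ and $end(\Theta)=end(\Delta)\cup end(\Sigma)$.
   Context: Formulas are built from a countably infinite set of propositional variables and $\bot$ using $\land,\lor,\to$; $\neg\alpha:=\alpha\to\bot$. $\mathbf{ML}_n$ is the smallest superintuitionistic logic (containing intuitionistic propositional logic, closed under modus ponens and uniform substitution) that contains all instances of $\boldsymbol{kp}$: $(\neg p\to q\lor r)\to(\neg p\to q)\lor(\neg p\to r)$ and $\boldsymbol{bd}_n$: $p_n\lor(p_n\to(p_{n-1}\lor(p_{n-1}\to(\cdots(p_1\lor(p_1\to\bot))\cdots))))$, and is closed under the rule $\boldsymbol{Ed}_n$: from $\alpha\to(\beta\lor\bigvee_{i=1}^n\neg\lambda_i)$ infer $\alpha\to\beta$, where $p_1,\dots,p_n$ are distinct variables not occurring in $\alpha$ or $\beta$ and $\lambda_i=p_i\land\bigwedge_{j\neq i}\neg p_j$. $\Gamma\vdash_n\varphi$ means there are finitely many $\gamma_1,\dots,\gamma_k\in\Gamma$ with $\bigwedge_i\gamma_i\to\varphi\in\mathbf{ML}_n$. A set $\Gamma$ of formulas is closed if $\Gamma\vdash_n\varphi$ implies $\varphi\in\Gamma$; consistent if $\Gamma\nvdash_n\bot$; prime if $\varphi\lor\psi\in\Gamma$ implies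 $\varphi\in\Gamma$ or $\psi\in\Gamma$. $P^c$ is the set of consistent, closed, prime sets, ordered by inclusion. In a poset, $End$ is the set of maximal elements and $end(w)$ the set of maximal elements above $w$. *)

(* Defs.v *)
From Stdlib Require Import List Arith.
Import ListNotations.

Inductive form : Type :=
| Var : nat -> form
| Bot : form
| And : form -> form -> form
| Or  : form -> form -> form
| Imp : form -> form -> form.

Definition Neg (a : form) : form := Imp a Bot.
Definition Top : form := Imp Bot Bot.

Fixpoint subst (s : nat -> form) (a : form) : form :=
  match a with
  | Var p => s p
  | Bot => Bot
  | And b c => And (subst s b) (subst s c)
  | Or b c => Or (subst s b) (subst s c)
  | Imp b c => Imp (subst s b) (subst s c)
  end.

Fixpoint occurs (v : nat) (a : form) : Prop :=
  match a with
  | Var p => p = v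
  | Bot => False
  | And b c | Or b c | Imp b c => occurs v b \/ occurs v c
  end.

Fixpoint bdf (k : nat) (f : nat -> form) : form :=
  match k with
  | 0 => Bot
  | S k' => Or (f (S k')) (Imp (f (S k')) (bdf k' f))
  end.

(* lambda_i = p_i /\ /\_{j <> i, 1<=j<=n} ~p_j  (for n = 1 it is just p_1) *)
Definition lam (n : nat) (ps : nat -> nat) (i : nat) : form :=
  fold_left (fun acc j => And acc (Neg (Var (ps j))))
            (filter (fun j => negb (Nat.eqb j i)) (seq 1 n))
            (Var (ps i)).

Definition ed_disj (n : nat) (ps : nat -> nat) (b : form) : form :=
  fold_left (fun acc i => Or acc (Neg (lam n ps i))) (seq 1 n) b.

Inductive ML (n : nat) : form -> Prop :=
| ax_K  : forall a b, ML n (Imp a (Imp b a))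
| ax_S  : forall a b c, ML n (Imp (Imp a (Imp b c)) (Imp (Imp a b) (Imp a c)))
| ax_A1 : forall a b, ML n (Imp (And a b) a)
| ax_A2 : forall a b, ML n (Imp (And a b) b)
| ax_A3 : forall a b, ML n (Imp a (Imp b (And a b)))
| ax_O1 : forall a b, ML n (Imp a (Or a b))
| ax_O2 : forall a b, ML n (Imp b (Or a b))
| ax_O3 : forall a b c, ML n (Imp (Imp a c) (Imp (Imp b c) (Imp (Or a b) c)))
| ax_EFQ : forall a, ML n (Imp Bot a)
| ax_kp : forall p q r,
    ML n (Imp (Imp (Neg p) (Or q r)) (Or (Imp (Neg p) q) (Imp (Neg p) r)))
| ax_bd : forall f : nat -> form, ML n (bdf n f)
| r_MP : forall a b, ML n (Imp a b) -> ML n a -> ML n b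
| r_US : forall (s : nat -> form) a, ML n a -> ML n (subst s a)
| r_Ed : forall (a b : form) (ps : nat -> nat),
    (forall i j, 1 <= i <= n -> 1 <= j <= n -> ps i = ps j -> i = j) ->
    (forall i, 1 <= i <= n -> ~ occurs (ps i) a /\ ~ occurs (ps i) b) ->
    ML n (Imp a (ed_disj n ps b)) -> ML n (Imp a b).

Definition fset := form -> Prop.

Definition conj_list (l : list form) : form := fold_right And Top l.

Definition derives (n : nat) (G : fset) (phi : form) : Prop :=
  exists l : list form, (forall g, In g l -> G g) /\ ML n (Imp (conj_list l) phi).

Definition closed (n : nat) (G : fset) : Prop := forall phi, derives n G phi -> G phi.
Definition consistent (n : nat) (G : fset) : Prop := ~ derives n G Bot.
Definition prime (G : fset) : Prop := forall a b, G (Or a b) -> G a \/ G b.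

Definition Pc (n : nat) (G : fset) : Prop := consistent n G /\ closed n G /\ prime G.

Definition incl (G D : fset) : Prop := forall phi, G phi -> D phi.

Definition End_ (n : nat) (G : fset) : Prop :=
  Pc n G /\ forall D, Pc n D -> incl G D -> incl D G.

Definition end_ (n : nat) (G D : fset) : Prop := End_ n D /\ incl G D.

(* Main.v *)
Require Import Defs.
From Stdlib Require Import List Arith Lia Classical Cantor.
Import ListNotations.

Inductive DerS (n : nat) (A : fset) : form -> Prop :=
| ds_hyp : forall a, A a -> DerS n A a
| ds_thm : forall a, ML n a -> DerS n A a
| ds_mp : forall a b, DerS n A (Imp a b) -> DerS n A a -> DerS n A b.

Definition add (A : fset) (a : form) : fset := fun x => A x \/ x = a.

Lemma ds_mono n (A B : fset) phi : (forall x, A x -> B x) -> DerS n A phi -> DerS n B phi.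
Proof. intros H D; induction D; [apply ds_hyp; auto | apply ds_thm; auto | eapply ds_mp; eauto]. Qed.

Lemma ds_id n A a : DerS n A (Imp a a).
Proof.
  apply ds_thm. eapply r_MP. eapply r_MP. apply (ax_S n a (Imp a a) a).
  apply ax_K. apply ax_K.
Qed.

Lemma ds_K n A a b : DerS n A a -> DerS n A (Imp b a).
Proof. intro H. eapply ds_mp; [apply ds_thm, ax_K | exact H]. Qed.

Lemma ds_deduct n A a b : DerS n (add A a) b -> DerS n A (Imp a b).
Proof.
  intro D; induction D as [x Hx|x Hx|x y D1 IH1 D2 IH2].
  - destruct Hx as [Hx| ->]. apply ds_K, ds_hyp, Hx. apply ds_id.
  - apply ds_K, ds_thm, Hx.
  - eapply ds_mp; [eapply ds_mp; [apply ds_thm, ax_S | exact IH1] | exact IH2].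
Qed.

Lemma ds_undeduct n A a b : DerS n A (Imp a b) -> DerS n (add A a) b.
Proof.
  intro H. eapply ds_mp. eapply ds_mono; [|exact H]. intros; left; auto.
  apply ds_hyp; right; auto.
Qed.

Lemma ds_cut n A a b : DerS n A a -> DerS n (add A a) b -> DerS n A b.
Proof. intros H1 H2. eapply ds_mp; [apply ds_deduct, H2 | exact H1]. Qed.

Lemma ds_ML n phi : DerS n (fun _ => False) phi -> ML n phi.
Proof. intro D; induction D; [contradiction | auto | eapply r_MP; eauto]. Qed.

Lemma ds_andI n A a b : DerS n A a -> DerS n A b -> DerS n A (And a b).
Proof. intros. eapply ds_mp; [eapply ds_mp; [apply ds_thm, ax_A3|]|]; eauto. Qed.
Lemma ds_andE1 n A a b : DerS n A (And a b) -> DerS n A a.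
Proof. intros. eapply ds_mp; [apply ds_thm, ax_A1|]; eauto. Qed.
Lemma ds_andE2 n A a b : DerS n A (And a b) -> DerS n A b.
Proof. intros. eapply ds_mp; [apply ds_thm, ax_A2|]; eauto. Qed.
Lemma ds_orI1 n A a b : DerS n A a -> DerS n A (Or a b).
Proof. intros. eapply ds_mp; [apply ds_thm, ax_O1|]; eauto. Qed.
Lemma ds_orI2 n A a b : DerS n A b -> DerS n A (Or a b).
Proof. intros. eapply ds_mp; [apply ds_thm, ax_O2|]; eauto. Qed.
Lemma ds_orE n A a b c : DerS n A (Or a b) -> DerS n (add A a) c -> DerS n (add A b) c -> DerS n A c.
Proof.
  intros H H1 H2. eapply ds_mp; [|exact H].
  eapply ds_mp; [eapply ds_mp; [apply ds_thm, ax_O3| apply ds_deduct, H1] | apply ds_deduct, H2].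
Qed.
Lemma ds_efq n A a : DerS n A Bot -> DerS n A a.
Proof. intros. eapply ds_mp; [apply ds_thm, ax_EFQ|]; eauto. Qed.

Lemma ds_conj_intro n A l : (forall x, In x l -> DerS n A x) -> DerS n A (conj_list l).
Proof.
  induction l as [|x l IH]; intro H; simpl.
  - apply ds_id.
  - apply ds_andI; [apply H; simpl; auto | apply IH; intros; apply H; simpl; auto].
Qed.

Lemma ds_conj_elim n A l x : DerS n A (conj_list l) -> In x l -> DerS n A x.
Proof.
  induction l as [|y l IH]; simpl; intros H Hi; [contradiction|].
  destruct Hi as [->|Hi]; [eapply ds_andE1; eauto | apply IH; [eapply ds_andE2; eauto | auto]].
Qed.

Lemma derives_DerS n A phi : derives n A phi <-> DerS n A phi.
Proof.
  split.
  - intros [l [Hl HM]]. eapply ds_mp; [apply ds_thm, HM|]. apply ds_conj_intro; intros; apply ds_hyp; auto.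
  - intro D; induction D as [x Hx|x Hx|x y D1 IH1 D2 IH2].
    + exists [x]. split; [simpl; intros g [->|[]]; auto | apply ax_A1].
    + exists []. split; [simpl; tauto|]. eapply r_MP; [apply ax_K|auto].
    + destruct IH1 as [l1 [H1 M1]], IH2 as [l2 [H2 M2]].
      exists (l1 ++ l2). split; [intros g Hg; apply in_app_or in Hg; destruct Hg; auto|].
      apply ds_ML, ds_deduct.
      assert (C : forall z, In z (l1 ++ l2) -> DerS n (add (fun _ => False) (conj_list (l1 ++ l2))) z).
      { intros z Hz; eapply ds_conj_elim; [apply ds_hyp; right; reflexivity | exact Hz]. }
      eapply ds_mp; [eapply ds_mp; [apply ds_thm, M1|] |].
      * apply ds_conj_intro; intros; apply C; apply in_or_app; auto.
      * eapply ds_mp; [apply ds_thm, M2|]. apply ds_conj_intro; intros; apply C; apply in_or_app; auto.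
Qed.

Definition PcD n (G : fset) := ~ DerS n G Bot /\ (forall phi, DerS n G phi -> G phi) /\ prime G.

Lemma Pc_PcD n G : Pc n G <-> PcD n G.
Proof.
  unfold Pc, PcD, consistent, closed. split; intros [H1 [H2 H3]]; repeat split; auto.
  - intro H; apply H1, derives_DerS, H.
  - intros; apply H2, derives_DerS; auto.
  - intro H; apply H1, derives_DerS, H.
  - intros; apply H2, derives_DerS; auto.
Qed.
Fixpoint enc (a : form) : nat :=
  match a with
  | Var p => to_nat (0, p)
  | Bot => to_nat (1, 0)
  | And b c => to_nat (2, to_nat (enc b, enc c))
  | Or b c => to_nat (3, to_nat (enc b, enc c))
  | Imp b c => to_nat (4, to_nat (enc b, enc c))
  end.

Fixpoint dec (f : nat) (k : nat) : form :=
  match f with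
  | 0 => Bot
  | S f =>
    match of_nat k with
    | (0, p) => Var p
    | (1, _) => Bot
    | (2, m) => let (x, y) := of_nat m in And (dec f x) (dec f y)
    | (3, m) => let (x, y) := of_nat m in Or (dec f x) (dec f y)
    | (4, m) => let (x, y) := of_nat m in Imp (dec f x) (dec f y)
    | _ => Bot
    end
  end.

Fixpoint depth (a : form) : nat :=
  match a with
  | Var _ | Bot => 1
  | And b c | Or b c | Imp b c => S (Nat.max (depth b) (depth c))
  end.

Lemma dec_enc a f : depth a <= f -> dec f (enc a) = a.
Proof.
  revert f; induction a; intros f Hf; destruct f as [|f]; cbn [depth] in Hf; try lia;
    cbn [dec enc]; rewrite cancel_of_to; auto;
    rewrite cancel_of_to; rewrite IHa1, IHa2 by lia; reflexivity.
Qed.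

Definition enum (k : nat) : form := let (f, c) := of_nat k in dec f c.

Lemma enum_surj a : exists k, enum k = a.
Proof.
  exists (to_nat (depth a, enc a)). unfold enum. rewrite cancel_of_to. apply dec_enc; auto.
Qed.

Definition disj (l : list form) : form := fold_right Or Bot l.

Definition Fcons n (A F : fset) : Prop :=
  forall l, (forall x, In x l -> F x) -> ~ DerS n A (disj l).

Fixpoint Zc n (A F : fset) (k : nat) : fset :=
  match k with
  | 0 => A
  | S k => fun x => Zc n A F k x \/ (x = enum k /\ Fcons n (add (Zc n A F k) (enum k)) F)
  end.

Lemma disj_app1 n A l1 l2 : DerS n A (disj l1) -> DerS n A (disj (l1 ++ l2)).
Proof.
  revert A; induction l1 as [|x l1 IH]; simpl; intros A H.
  - apply ds_efq, H.
  - eapply ds_orE; [exact H| apply ds_orI1, ds_hyp; right; auto |].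
    apply ds_orI2, IH, ds_hyp; right; auto.
Qed.

Lemma disj_app2 n A l1 l2 : DerS n A (disj l2) -> DerS n A (disj (l1 ++ l2)).
Proof. induction l1; simpl; intros; [auto | apply ds_orI2; auto]. Qed.

Lemma Fcons_mono n A B F : (forall x, A x -> B x) -> Fcons n B F -> Fcons n A F.
Proof. intros H HB l Hl D; apply (HB l Hl); eapply ds_mono; eauto. Qed.

Lemma Zc_mono n A F k k' : k <= k' -> forall x, Zc n A F k x -> Zc n A F k' x.
Proof. induction 1; simpl; auto. Qed.

Lemma Zc_Fcons n A F : Fcons n A F -> forall k, Fcons n (Zc n A F k) F.
Proof.
  intros H k; induction k as [|k IH]; simpl; auto.
  destruct (classic (Fcons n (add (Zc n A F k) (enum k)) F)) as [Hc|Hc].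
  - eapply Fcons_mono; [|exact Hc]. intros x [Hx|[Hx _]]; [left|right]; auto.
  - eapply Fcons_mono; [|exact IH]. intros x [Hx|[_ Hx]]; [auto|contradiction].
Qed.

Definition Zl n A F : fset := fun x => exists k, Zc n A F k x.

Lemma Zl_compact n A F phi : DerS n (Zl n A F) phi -> exists k, DerS n (Zc n A F k) phi.
Proof.
  intro D; induction D as [x [k Hx]|x Hx|x y D1 [k1 IH1] D2 [k2 IH2]].
  - exists k; apply ds_hyp; auto.
  - exists 0; apply ds_thm; auto.
  - exists (Nat.max k1 k2). eapply ds_mp; eapply ds_mono; try eassumption;
      apply Zc_mono; lia.
Qed.

Lemma not_Fcons n B F : ~ Fcons n B F -> exists l, (forall x, In x l -> F x) /\ DerS n B (disj l).
Proof.
  intro H. apply NNPP; intro H'. apply H; intros l Hl D. apply H'; eauto.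
Qed.

Lemma Zl_notin n A F a : ~ Zl n A F a -> exists l, (forall x, In x l -> F x) /\ DerS n (add (Zl n A F) a) (disj l).
Proof.
  intro H. destruct (enum_surj a) as [k Hk].
  destruct (classic (Fcons n (add (Zc n A F k) (enum k)) F)) as [Hc|Hc].
  - exfalso; apply H; exists (S k); simpl; right; split; auto.
  - destruct (not_Fcons _ _ _ Hc) as [l [Hl D]]. exists l; split; auto.
    eapply ds_mono; [|exact D]. intros x [Hx| ->]; [left; exists k; auto | right; auto].
Qed.

Lemma lindenbaum n A F : Fcons n A F ->
  exists Z, (forall x, A x -> Z x) /\ (forall phi, DerS n Z phi -> Z phi) /\ prime Z /\ Fcons n Z F.
Proof.
  intro HA. assert (HZ : Fcons n (Zl n A F) F).
  { intros l Hl D. destruct (Zl_compact _ _ _ _ D) as [k Dk]. eapply Zc_Fcons; eauto. }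
  exists (Zl n A F). split; [intros x Hx; exists 0; auto|]. split; [|split; auto].
  - intros phi D. apply NNPP; intro Hn. destruct (Zl_notin _ _ _ _ Hn) as [l [Hl Dl]].
    apply (HZ l Hl). eapply ds_cut; eauto.
  - intros a b Hab. apply NNPP; intro Hn.
    destruct (Zl_notin n A F a) as [l1 [H1 D1]]; [tauto|].
    destruct (Zl_notin n A F b) as [l2 [H2 D2]]; [tauto|].
    apply (HZ (l1 ++ l2)). intros x Hx; apply in_app_or in Hx; destruct Hx; auto.
    eapply ds_orE; [apply ds_hyp; exact Hab | apply disj_app1, D1 | apply disj_app2, D2].
Qed.

Lemma Fcons_avoid n Z F f : Fcons n Z F -> Z f -> F f -> False.
Proof.
  intros H Zf Ff. apply (H [f]). simpl; intros x [->|[]]; auto.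
  simpl; apply ds_orI1, ds_hyp, Zf.
Qed.
Lemma Pc_der n G phi : Pc n G -> DerS n G phi -> G phi.
Proof. intros H D; apply Pc_PcD in H; destruct H as [_ [H _]]; auto. Qed.
Lemma Pc_cons n G : Pc n G -> ~ G Bot.
Proof. intros H HB; apply Pc_PcD in H; destruct H as [H _]; apply H, ds_hyp, HB. Qed.
Lemma Pc_prime n G : Pc n G -> prime G.
Proof. intros H; apply Pc_PcD in H; destruct H as [_ [_ H]]; auto. Qed.
Lemma Pc_mp n G a b : Pc n G -> G (Imp a b) -> G a -> G b.
Proof. intros H H1 H2. apply (Pc_der n); auto. eapply ds_mp; apply ds_hyp; eauto. Qed.

Lemma disj_bot n l : forall A, (forall x, In x l -> x = Bot) -> DerS n A (disj l) -> DerS n A Bot.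
Proof.
  induction l as [|x l IH]; simpl; intros A Hl D; auto.
  eapply ds_orE; [exact D| |].
  - rewrite (Hl x) by auto. apply ds_hyp; right; auto.
  - apply IH; [auto | apply ds_hyp; right; auto].
Qed.

Lemma lind_Pc n A : ~ DerS n A Bot -> exists Z, (forall x, A x -> Z x) /\ Pc n Z.
Proof.
  intro H. destruct (lindenbaum n A (fun x => x = Bot)) as [Z [H1 [H2 [H3 H4]]]].
  - intros l Hl D. apply H. eapply disj_bot; eauto.
  - exists Z; split; auto. apply Pc_PcD; split; [|split; auto].
    intro D. eapply (Fcons_avoid n Z (fun x => x = Bot) Bot); eauto.
Qed.

Lemma End_em n Y phi : End_ n Y -> Y phi \/ Y (Neg phi).
Proof.
  intros [HY Hmax]. destruct (classic (Y (Neg phi))) as [h|h]; auto. left.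
  destruct (lind_Pc n (add Y phi)) as [Z [HZ PZ]].
  - intro D. apply h. apply (Pc_der n); auto. apply ds_deduct, D.
  - assert (I : Defs.incl Z Y) by (apply Hmax; auto; intros x Hx; apply HZ; left; auto).
    apply I, HZ; right; auto.
Qed.

Lemma bdf_ext k f g : (forall i, i <= k -> f i = g i) -> bdf k f = bdf k g.
Proof.
  induction k as [|k IH]; simpl; intro H; auto.
  rewrite H, IH by (auto; intros; apply H; lia). reflexivity.
Qed.

Lemma end_exists_k n k : forall D, Pc n D -> (forall f, D (bdf k f)) ->
  exists X, End_ n X /\ Defs.incl D X.
Proof.
  induction k as [|k IH]; intros D PD HD.
  - exfalso. apply (Pc_cons n D PD), (HD (fun _ => Bot)).
  - destruct (classic (End_ n D)) as [HE|HE]; [exists D; split; [auto | intros x; auto]|].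
    assert (exists D', Pc n D' /\ Defs.incl D D' /\ exists a, D' a /\ ~ D a) as [D' [P' [I' [a [Ha Hna]]]]].
    { apply NNPP; intro C. apply HE; split; auto. intros D' P' I' x Hx.
      apply NNPP; intro Hx'. apply C; exists D'; split; [auto|split; [auto|exists x; auto]]. }
    destruct (IH D' P') as [X [EX IX]].
    + intro g. set (f := fun i => if Nat.eqb i (S k) then a else g i).
      assert (Hf : D (bdf (S k) f)) by apply HD.
      simpl in Hf. unfold f at 1 2 in Hf. rewrite Nat.eqb_refl in Hf.
      rewrite (bdf_ext k f g) in Hf.
      2:{ intros i Hi; unfold f; destruct (Nat.eqb_spec i (S k)); [lia|auto]. }
      destruct (Pc_prime n D PD _ _ Hf) as [h|h]; [contradiction|].
      eapply Pc_mp; eauto.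
    + exists X; split; auto. intros x Hx; auto.
Qed.

Lemma end_exists n D : Pc n D -> exists X, End_ n X /\ Defs.incl D X.
Proof.
  intro PD. apply (end_exists_k n n D PD). intro f. apply (Pc_der n); auto. apply ds_thm, ax_bd.
Qed.
Definition NN (x : form) := Neg (Neg x).

Ltac hyp := apply ds_hyp; unfold add; tauto.
Ltac lift H := eapply ds_mono; [|exact H]; intros; unfold add; tauto.

Lemma ds_neg_elim n B x : DerS n B (Neg x) -> DerS n B x -> DerS n B Bot.
Proof. intros; eapply ds_mp; eauto. Qed.

Lemma nn_mono n B x y : DerS n B (Imp x y) -> DerS n B (Imp (NN x) (NN y)).
Proof.
  intro H. unfold NN, Neg. apply ds_deduct, ds_deduct.
  apply (ds_mp _ _ (Imp x Bot)); [hyp|]. apply ds_deduct.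
  apply (ds_mp _ _ y); [hyp|]. apply (ds_mp _ _ x); [lift H|hyp].
Qed.

Lemma nn_intro n B x : DerS n B x -> DerS n B (NN x).
Proof. intro H. unfold NN, Neg. apply ds_deduct. apply (ds_mp _ _ x); [hyp|lift H]. Qed.

Lemma or_and1 n B d1 d2 s1 s2 : DerS n B (Imp (Or (And d1 d2) (And s1 s2)) (Or d1 s1)).
Proof.
  apply ds_deduct. eapply ds_orE; [hyp| |].
  - apply ds_orI1. eapply ds_andE1; hyp.
  - apply ds_orI2. eapply ds_andE1; hyp.
Qed.
Lemma or_and2 n B d1 d2 s1 s2 : DerS n B (Imp (Or (And d1 d2) (And s1 s2)) (Or d2 s2)).
Proof.
  apply ds_deduct. eapply ds_orE; [hyp| |].
  - apply ds_orI1. eapply ds_andE2; hyp.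
  - apply ds_orI2. eapply ds_andE2; hyp.
Qed.

Lemma K1 n (G D S : fset) : Pc n G -> Pc n D -> Pc n S ->
  forall psi, DerS n (fun phi => G phi \/ exists d s, D d /\ S s /\ phi = NN (Or d s)) psi ->
  exists d s, D d /\ S s /\ G (Imp (NN (Or d s)) psi).
Proof.
  intros PG PD PS psi Dr.
  assert (TD : D Top) by (apply (Pc_der n); auto; apply ds_thm, ax_EFQ).
  assert (TS : S Top) by (apply (Pc_der n); auto; apply ds_thm, ax_EFQ).
  induction Dr as [x [Hx|[d [s [Hd [Hs ->]]]]]|x Hx|x y D1 [d1 [s1 [Hd1 [Hs1 G1]]]] D2 [d2 [s2 [Hd2 [Hs2 G2]]]]].
  - exists Top, Top. repeat split; auto. apply (Pc_der n); auto. apply ds_K, ds_hyp, Hx.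
  - exists d, s. repeat split; auto. apply (Pc_der n); auto. apply ds_id.
  - exists Top, Top. repeat split; auto. apply (Pc_der n); auto. apply ds_K, ds_thm, Hx.
  - exists (And d1 d2), (And s1 s2). split; [|split].
    + apply (Pc_der n); auto. apply ds_andI; apply ds_hyp; auto.
    + apply (Pc_der n); auto. apply ds_andI; apply ds_hyp; auto.
    + apply (Pc_der n); auto. apply ds_deduct.
      assert (E1 : DerS n (add G (NN (Or (And d1 d2) (And s1 s2)))) (NN (Or d1 s1))).
      { eapply ds_mp; [apply nn_mono, or_and1|hyp]. }
      assert (E2 : DerS n (add G (NN (Or (And d1 d2) (And s1 s2)))) (NN (Or d2 s2))).
      { eapply ds_mp; [apply nn_mono, or_and2|hyp]. }
      eapply ds_mp; [eapply ds_mp; [apply ds_hyp; left; exact G1 | exact E1] |].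
      eapply ds_mp; [apply ds_hyp; left; exact G2 | exact E2].
Qed.

Lemma K2 n G p : Pc n G -> forall l, G (Imp (Neg p) (disj l)) ->
  G (Imp (Neg p) Bot) \/ exists f, In f l /\ G (Imp (Neg p) f).
Proof.
  intros PG l; induction l as [|x l IH]; simpl; intro H; auto.
  assert (Hk : G (Or (Imp (Neg p) x) (Imp (Neg p) (disj l)))).
  { eapply Pc_mp; eauto. apply (Pc_der n); auto. apply ds_thm, ax_kp. }
  destruct (Pc_prime n G PG _ _ Hk) as [h|h].
  - right; exists x; auto.
  - destruct (IH h) as [h'|[f [Hf Hf']]]; auto. right; exists f; auto.
Qed.
Import Defs.
Theorem mainTheorem5 (n : nat) (Hn : 1 <= n) :
  forall G D S : fset,
    Pc n G -> Pc n D -> Pc n S -> incl G D -> incl G S ->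
    exists T : fset,
      Pc n T /\ incl G T /\
      (forall X : fset, end_ n T X <-> (end_ n D X \/ end_ n S X)).
Proof.
  intros G D S PG PD PS GD GS.
  set (E := fun X => End_ n X /\ (Defs.incl D X \/ Defs.incl S X)).
  set (A := fun phi => G phi \/ exists d s, D d /\ S s /\ phi = NN (Or d s)).
  set (F := fun f => exists X, E X /\ ~ X f).
  destruct (end_exists n D PD) as [X0 [EX0 IX0]].
  assert (E0 : E X0) by (split; auto).
  assert (EG : forall X, E X -> Defs.incl G X).
  { intros X [_ [I|I]] x Hx; apply I; [apply GD|apply GS]; auto. }
  assert (ENN : forall X d s, E X -> D d -> S s -> X (NN (Or d s))).
  { intros X d s [[PX _] [I|I]] Hd Hs; apply (Pc_der n); auto; apply nn_intro;
      [apply ds_orI1|apply ds_orI2]; apply ds_hyp; auto. }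
  assert (HA : Fcons n A F).
  { intros l Hl Dr. destruct (K1 n G D S PG PD PS _ Dr) as [d [s [Hd [Hs Hg]]]].
    destruct (K2 n G (Neg (Or d s)) PG l Hg) as [h|[f [Hf Hf']]].
    - apply (Pc_cons n X0 (proj1 EX0)). eapply Pc_mp; [apply (proj1 EX0)| |].
      apply (EG X0 E0), h. exact (ENN X0 d s E0 Hd Hs).
    - destruct (Hl f Hf) as [X [EX nX]]. apply nX. eapply Pc_mp; [apply (proj1 (proj1 EX))| |].
      apply (EG X EX), Hf'. exact (ENN X d s EX Hd Hs). }
  destruct (lindenbaum n A F HA) as [T [IT [CT [PrT FT]]]].
  assert (TE : forall X, E X -> Defs.incl T X).
  { intros X EX f Hf. apply NNPP; intro nf. eapply Fcons_avoid; eauto. exists X; auto. }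
  assert (PT : Pc n T).
  { apply Pc_PcD; split; [|split; auto]. intro Db.
    apply (Pc_cons n X0 (proj1 EX0)). apply (TE X0 E0), CT, Db. }
  exists T. split; [auto|split].
  - intros x Hx; apply IT; left; auto.
  - intro X; unfold end_; split.
    + intros [EX IX]. destruct (classic (Defs.incl D X)) as [h|h]; [left; auto|].
      destruct (classic (Defs.incl S X)) as [h'|h']; [right; auto|].
      exfalso.
      assert (exists d, D d /\ ~ X d) as [d [Hd nd]].
      { apply NNPP; intro C; apply h; intros x Hx; apply NNPP; intro; apply C; eauto. }
      assert (exists s, S s /\ ~ X s) as [s [Hs ns]].
      { apply NNPP; intro C; apply h'; intros x Hx; apply NNPP; intro; apply C; eauto. }
      destruct (End_em n X d EX) as [|Nd]; [contradiction|].
      destruct (End_em n X s EX) as [|Ns]; [contradiction|].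
      assert (Hnn : X (NN (Or d s))) by (apply IX, IT; right; exists d, s; auto).
      apply (Pc_cons n X (proj1 EX)). apply (Pc_der n); [apply (proj1 EX)|].
      apply (ds_mp _ _ (Neg (Or d s))); [apply ds_hyp, Hnn|].
      apply ds_deduct. eapply ds_orE; [hyp| |].
      * apply (ds_mp _ _ d); [apply ds_hyp; left; left; exact Nd | hyp].
      * apply (ds_mp _ _ s); [apply ds_hyp; left; left; exact Ns | hyp].
    + intros [[EX IX]|[EX IX]]; split; auto; apply TE; split; auto.
Qed.
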